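(* Let $n\ge2$, $A_0,\dots,A_{n-1}\in\mathbb{R}$, $A_n=1$, $F(a)=\sum_{k=0}^nA_ka^k$, and define $\sigma_k$ by $(-1)^k\sigma_k=A_{n-k}$, $0\le k\le n$. Let $x(a)$ be smooth with $\dot x\neq0$ on an open interval $I\subset(0,\infty)$, $H=\Pi^2+aP_y^2$, $\Pi=\frac a{\dot x}P_a$, $G=\sum_{k=0}^nA_kH^kP_y^{2(n-k)}$, and $$Q_1=\sum_{k=1}^n(-1)^k\beta_k(a)\,H^{n-k}\,\Pi\,P_y^{2k-1},\qquad S_1=Q_1+yG .$$ If the functions $\beta_k$ satisfy $$\dot\beta_1=\dot x,\qquad \dot\beta_{k+1}=-a\dot\beta_k-\tfrac12\beta_k+\sigma_k\dot x\ \ (1\le k\le n-1),\qquad 0=-a\dot\beta_n-\tfrac12\beta_n+\sigma_n\dot x,$$ then $\{H,S_1\}=0$. Moreover, if $F=\prod_{i=1}^n(a-a_i)$ with distinct real $a_i$ and $x=\sum_{i=1}^n\xi_i\Delta_i^{-1/2}$ with $\Delta_i=\epsilon_i(a-a_i)>0$, $\epsilon_i\in\{\pm1\}$, $\xi_i\in\mathbb{R}$, then $\beta_k=\sum_{i=1}^n\frac{\xi_i}{\sqrt{\Delta_i}}\sigma^i_{k-1}$ ($1\le k\le n$) solves this system.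
   Context: A dot denotes $d/da$; $\{\cdot,\cdot\}$ is the canonical Poisson bracket with $(P_a,P_y)$ conjugate to $(a,y)$. For each $i$, $\sigma^i_m$ ($-1\le m\le n$) are defined by $\prod_{l\neq i}(a-a_l)=\sum_{m=0}^{n-1}(-1)^m\sigma^i_ma^{n-1-m}$ with $\sigma^i_{-1}=\sigma^i_n=0$. *)

(* Defs.v *)
From Stdlib Require Import Reals List.
From Coquelicot Require Import Coquelicot.
Open Scope R_scope.

(* sumR m n f = f m + f (m+1) + ... + f n  (empty if n < m) *)
Definition sumR (m n : nat) (f : nat -> R) : R :=
  fold_right (fun k acc => f k + acc) 0 (List.seq m (S n - m)).

(* prodR m n f = f m * ... * f n  (empty product 1 if n < m) *)
Definition prodR (m n : nat) (f : nat -> R) : R :=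
  fold_right (fun k acc => f k * acc) 1 (List.seq m (S n - m)).

(* Phase-space functions of (a, y, P_a, P_y). *)
Definition phase := R -> R -> R -> R -> R.

Definition PB (f g : phase) : phase := fun a y pa py =>
    Derive (fun t => f t y pa py) a * Derive (fun t => g a y t py) pa
  - Derive (fun t => f a y t py) pa * Derive (fun t => g t y pa py) a
  + Derive (fun t => f a t pa py) y * Derive (fun t => g a y pa t) py
  - Derive (fun t => f a y pa t) py * Derive (fun t => g a t pa py) y.

Definition Pi (x : R -> R) (a pa : R) : R := a / Derive x a * pa.

Definition Hf (x : R -> R) : phase := fun a y pa py =>
  (Pi x a pa) ^ 2 + a * py ^ 2.

Definition Gf (n : nat) (A : nat -> R) (x : R -> R) : phase := fun a y pa py =>
  sumR 0 n (fun k => A k * (Hf x a y pa py) ^ k * py ^ (2 * (n - k))).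

Definition Q1f (n : nat) (beta : nat -> R -> R) (x : R -> R) : phase :=
  fun a y pa py =>
  sumR 1 n (fun k => (-1) ^ k * beta k a * (Hf x a y pa py) ^ (n - k)
                      * Pi x a pa * py ^ (2 * k - 1)).

Definition S1f (n : nat) (A : nat -> R) (beta : nat -> R -> R) (x : R -> R)
  : phase := fun a y pa py =>
  Q1f n beta x a y pa py + y * Gf n A x a y pa py.

Definition sigma (n : nat) (A : nat -> R) (k : nat) : R := (-1) ^ k * A (n - k)%nat.

Definition in_interval (lo hi : Rbar) (a : R) : Prop :=
  Rbar_lt lo a /\ Rbar_lt a hi.

Definition beta_system (n : nat) (A : nat -> R) (x : R -> R)
    (beta : nat -> R -> R) (I : R -> Prop) : Prop :=
  (forall k a, (1 <= k <= n)%nat -> I a -> ex_derive (beta k) a) /\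
  (forall a, I a -> Derive (beta 1%nat) a = Derive x a) /\
  (forall k a, (1 <= k <= n - 1)%nat -> I a ->
      Derive (beta (S k)) a =
        - a * Derive (beta k) a - / 2 * beta k a + sigma n A k * Derive x a) /\
  (forall a, I a ->
      0 = - a * Derive (beta n) a - / 2 * beta n a + sigma n A n * Derive x a).

(* Main.v *)
Require Import Defs.
From Stdlib Require Import Reals List.
From Coquelicot Require Import Coquelicot.
From Stdlib Require Import Lia Lra.
Open Scope R_scope.

Definition sumL (m len : nat) (f : nat -> R) : R :=
  fold_right (fun k acc => f k + acc) 0 (List.seq m len).

Lemma sumR_L m n f : sumR m n f = sumL m (S n - m) f.
Proof. reflexivity. Qed.

Lemma sumL_0 m f : sumL m 0 f = 0.
Proof. reflexivity. Qed.

Lemma sumL_S m len f : sumL m (S len) f = f m + sumL (S m) len f.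
Proof. reflexivity. Qed.

Lemma sumL_Sr len : forall m f, sumL m (S len) f = sumL m len f + f (m + len)%nat.
Proof.
  induction len as [|len IH]; intros m f.
  - rewrite sumL_S, !sumL_0. replace (m+0)%nat with m by lia. ring.
  - rewrite sumL_S, IH, sumL_S. replace (S m + len)%nat with (m + S len)%nat by lia. ring.
Qed.

Lemma sumL_ext len : forall m f g, (forall k, (m <= k < m + len)%nat -> f k = g k) ->
  sumL m len f = sumL m len g.
Proof.
  induction len as [|len IH]; intros m f g H.
  - reflexivity.
  - rewrite !sumL_S. rewrite (H m) by lia. f_equal. apply IH. intros; apply H; lia.
Qed.

Lemma sumL_plus len : forall m f g, sumL m len (fun k => f k + g k) = sumL m len f + sumL m len g.
Proof.
  induction len as [|len IH]; intros m f g.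
  - rewrite !sumL_0; ring.
  - rewrite !sumL_S, IH. ring.
Qed.

Lemma sumL_scal len : forall m c f, sumL m len (fun k => c * f k) = c * sumL m len f.
Proof.
  induction len as [|len IH]; intros m c f.
  - rewrite !sumL_0; ring.
  - rewrite !sumL_S, IH. ring.
Qed.

Lemma sumL_minus len m f g : sumL m len (fun k => f k - g k) = sumL m len f - sumL m len g.
Proof.
  unfold Rminus. rewrite sumL_plus.
  replace (sumL m len (fun k => - g k)) with (sumL m len (fun k => -1 * g k)).
  - rewrite sumL_scal. ring.
  - apply sumL_ext; intros; ring.
Qed.

Lemma sumL_shift len : forall m f, sumL (S m) len f = sumL m len (fun k => f (S k)).
Proof.
  induction len as [|len IH]; intros m f.
  - reflexivity.
  - rewrite !sumL_S, IH. reflexivity.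
Qed.

Lemma sumL_tele len : forall m g, sumL m len (fun k => g (S k) - g k) = g (m + len)%nat - g m.
Proof.
  induction len as [|len IH]; intros m g.
  - rewrite Nat.add_0_r, sumL_0; ring.
  - rewrite sumL_S, IH. replace (S m + len)%nat with (m + S len)%nat by lia. ring.
Qed.

Lemma sumL_rev n : forall f, sumL 0 (S n) f = sumL 0 (S n) (fun k => f (n - k)%nat).
Proof.
  induction n as [|n IH]; intros f.
  - reflexivity.
  - rewrite sumL_Sr, IH, (sumL_S 0 (S n) (fun k => f (S n - k)%nat)), sumL_shift.
    simpl. ring.
Qed.

Lemma sumL_der len : forall m (f f' : nat -> R -> R) a,
  (forall k, (m <= k < m + len)%nat -> is_derive (f k) a (f' k a)) ->
  is_derive (fun t => sumL m len (fun k => f k t)) a (sumL m len (fun k => f' k a)).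
Proof.
  induction len as [|len IH]; intros m f f' a H.
  - unfold sumL; simpl. apply (is_derive_const (V:=R_NormedModule) 0 a).
  - rewrite sumL_S. apply (is_derive_plus (fun t => f m t) (fun t => sumL (S m) len (fun k => f k t))).
    + apply H; lia.
    + apply IH. intros; apply H; lia.
Qed.

Lemma sign_sq k : (-1) ^ k * (-1) ^ k = 1.
Proof. rewrite <- Rpow_mult_distr. replace (-1 * -1) with 1 by ring. apply pow1. Qed.

Lemma master n (hn : (1 <= n)%nat) (A : nat -> R) (b b' : nat -> R) (h P py a D : R) :
  D <> 0 -> A n = 1 -> h = P ^ 2 + a * py ^ 2 -> b' 1%nat = D ->
  (forall k, (1 <= k <= n - 1)%nat -> b' (S k) = - a * b' k - / 2 * b k + Defs.sigma n A k * D) ->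
  0 = - a * b' n - / 2 * b n + Defs.sigma n A n * D ->
  sumR 1 n (fun k => (-1) ^ k * py ^ (2 * k - 1) * h ^ (n - k) *
                     (b k * py ^ 2 * a / D - 2 * P ^ 2 * (a / D) * b' k))
  - 2 * a * py * sumR 0 n (fun j => A j * h ^ j * py ^ (2 * (n - j))) = 0.
Proof.
  intros HD HAn Hh Hb1 Hsys Hlast.
  assert (HP : P ^ 2 = h - a * py ^ 2) by (rewrite Hh; ring).
  set (c := fun k => if Nat.eqb k (S n) then 0 else (-1) ^ k * b' k * py ^ (2 * k - 1) * h ^ (S n - k)).
  rewrite !sumR_L.
  replace (S n - 1)%nat with n by lia. replace (S n - 0)%nat with (S n) by lia.
  rewrite (sumL_ext n 1 _ (fun k => 2 * a * (A (n - k)%nat * py ^ (2 * k + 1) * h ^ (n - k))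
                                   + (a / D) * 2 * (c (S k) - c k))).
  2:{ intros k Hk. rewrite HP.
      assert (Hs : A (n - k)%nat = (-1) ^ k * Defs.sigma n A k).
      { unfold Defs.sigma. rewrite <- Rmult_assoc, sign_sq. ring. }
      rewrite Hs. unfold c.
      replace (Nat.eqb k (S n)) with false by (symmetry; apply Nat.eqb_neq; lia).
      set (e := (2 * k - 1)%nat). set (m := (n - k)%nat).
      replace (2 * k + 1)%nat with (e + 2)%nat by (unfold e; lia).
      replace (S n - k)%nat with (S m) by (unfold m; lia).
      destruct (Nat.eq_dec k n) as [Ekn | Nkn].
      - replace (Nat.eqb (S k) (S n)) with true by (symmetry; apply Nat.eqb_eq; lia).
        subst k. rewrite pow_add; simpl pow.
        assert (Hl : / 2 * b n = - a * b' n + Defs.sigma n A n * D) by lra.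
        replace (b n) with (2 * (- a * b' n + Defs.sigma n A n * D)) by lra. field; exact HD.
      - replace (Nat.eqb (S k) (S n)) with false by (symmetry; apply Nat.eqb_neq; lia).
        replace (2 * S k - 1)%nat with (e + 2)%nat by (unfold e; lia).
        replace (S n - S k)%nat with m by (unfold m; lia).
        rewrite (Hsys k) by lia.
        rewrite pow_add; simpl pow. simpl pow. field. exact HD. }
  rewrite sumL_plus, sumL_scal, (sumL_scal n 1 (a / D * 2)), sumL_tele.
  replace (c (1 + n)%nat) with 0 by (unfold c; rewrite Nat.eqb_refl; reflexivity).
  unfold c. replace (Nat.eqb 1 (S n)) with false by (symmetry; apply Nat.eqb_neq; lia).
  rewrite sumL_rev, sumL_S.
  rewrite (sumL_ext n 1 (fun k => A (n - k)%nat * h ^ (n - k) * py ^ (2 * (n - (n - k))))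
             (fun k => A (n - k)%nat * h ^ (n - k) * py ^ (2 * k))).
  2:{ intros k Hk. replace (n - (n - k))%nat with k by lia. reflexivity. }
  rewrite (sumL_ext n 1 (fun k => A (n - k)%nat * py ^ (2 * k + 1) * h ^ (n - k))
             (fun k => py * (A (n - k)%nat * h ^ (n - k) * py ^ (2 * k)))).
  2:{ intros k Hk. rewrite pow_add. ring. }
  rewrite sumL_scal. rewrite Hb1.
  replace (n - (n - 0))%nat with 0%nat by lia. replace (n - 0)%nat with n by lia.
replace (S n - 1)%nat with n by lia.   rewrite HAn. simpl pow. field. exact HD.
Qed.

Lemma term_der (b h p : R -> R) b' h' p' c d m a :
  is_derive b a b' -> is_derive h a h' -> is_derive p a p' ->
  is_derive (fun t => c * b t * h t ^ m * p t * d) a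
    (c * d * (b' * h a ^ m * p a + b a * (INR m * h a ^ pred m * h') * p a + b a * h a ^ m * p')).
Proof.
  intros Hb Hh Hp. auto_derive.
  - repeat split; eexists; eauto.
  - replace (Derive (fun x => b x) a) with b' by (symmetry; apply is_derive_unique; exact Hb).
    replace (Derive (fun x => h x) a) with h' by (symmetry; apply is_derive_unique; exact Hh).
    replace (Derive (fun x => p x) a) with p' by (symmetry; apply is_derive_unique; exact Hp). ring.
Qed.

Lemma g_der (h : R -> R) h' c d m a :
  is_derive h a h' ->
  is_derive (fun t => c * h t ^ m * d) a (c * d * (INR m * h a ^ pred m * h')).
Proof.
  intros Hh. auto_derive.
  - repeat split; eexists; eauto.
  - replace (Derive (fun x => h x) a) with h' by (symmetry; apply is_derive_unique; exact Hh). ring.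
Qed.

Lemma sumR_der m n (f f' : nat -> R -> R) a :
  (forall k, (m <= k <= n)%nat -> is_derive (f k) a (f' k a)) ->
  is_derive (fun t => sumR m n (fun k => f k t)) a (sumR m n (fun k => f' k a)).
Proof.
  intros H. apply (sumL_der (S n - m) m f f' a). intros k Hk. apply H. lia.
Qed.

Lemma sq_der (p : R -> R) p' c a :
  is_derive p a p' -> is_derive (fun t => p t ^ 2 + t * c) a (2 * p a * p' + c).
Proof.
  intros Hp. auto_derive.
  - repeat split; eexists; eauto.
  - replace (Derive (fun x => p x) a) with p' by (symmetry; apply is_derive_unique; exact Hp). ring.
Qed.

Lemma sq_der2 (p : R -> R) p' c a :
  is_derive p a p' -> is_derive (fun t => p t ^ 2 + c) a (2 * p a * p').
Proof.
  intros Hp. auto_derive.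
  - repeat split; eexists; eauto.
  - replace (Derive (fun x => p x) a) with p' by (symmetry; apply is_derive_unique; exact Hp). ring.
Qed.

Lemma part1 (n : nat) (hn : (2 <= n)%nat) :
  (forall (A : nat -> R) (lo hi : Rbar) (x : R -> R) (beta : nat -> R -> R),
     A n = 1 ->
     Rbar_le (Finite 0) lo -> Rbar_lt lo hi ->
     (forall k a, in_interval lo hi a -> ex_derive_n x k a) ->
     (forall a, in_interval lo hi a -> Derive x a <> 0) ->
     beta_system n A x beta (in_interval lo hi) ->
     forall a y pa py, in_interval lo hi a ->
       PB (Hf x) (S1f n A beta x) a y pa py = 0).
Proof.
  intros A lo hi x beta HAn _ _ Hsm Hnz [Hex [H1 [Hsys Hlast]]] a y pa py Ha.
  set (D := Derive x a).
  assert (HD : D <> 0) by (apply Hnz; exact Ha).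
  assert (HD2 : ex_derive (Derive x) a) by exact (Hsm 2%nat a Ha).
  assert (Hpi_a : is_derive (fun t => Pi x t pa) a (Derive (fun t => Pi x t pa) a)).
  { apply Derive_correct. unfold Pi. auto_derive. split; [exact HD2|]. split; [exact HD| exact I]. }
  set (Pa := Derive (fun t => Pi x t pa) a).
  assert (Hpi_pa : is_derive (fun t => Pi x a t) pa (a / D)).
  { unfold Pi. auto_derive; [exact I|]. unfold D. ring. }
  set (P := Pi x a pa). set (h := Hf x a y pa py).
  set (Ha' := 2 * P * Pa + py ^ 2). set (Hpa := 2 * P * (a / D)).
  assert (HH_a : is_derive (fun t => Hf x t y pa py) a Ha').
  { apply (sq_der (fun t => Pi x t pa)). exact Hpi_a. }
  assert (HH_pa : is_derive (fun t => Hf x a y t py) pa Hpa).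
  { apply (sq_der2 (fun t => Pi x a t)). exact Hpi_pa. }
  assert (HH_py : is_derive (fun t => Hf x a y pa t) py (2 * a * py)).
  { unfold Hf. auto_derive; [exact I|]. ring. }
  assert (HH_y : Derive (fun t => Hf x a t pa py) y = 0).
  { unfold Hf. apply Derive_const. }
  set (Gs := sumR 0 n (fun j => A j * py ^ (2 * (n - j)) * (INR j * h ^ pred j))).
  set (Qa := sumR 1 n (fun k => (-1) ^ k * py ^ (2 * k - 1) *
        (Derive (beta k) a * h ^ (n - k) * P + beta k a * (INR (n - k) * h ^ pred (n - k) * Ha') * P
         + beta k a * h ^ (n - k) * Pa))).
  set (Qpa := sumR 1 n (fun k => (-1) ^ k * py ^ (2 * k - 1) *
        (0 * h ^ (n - k) * P + beta k a * (INR (n - k) * h ^ pred (n - k) * Hpa) * P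
         + beta k a * h ^ (n - k) * (a / D)))).
  assert (HS_a : is_derive (fun t => S1f n A beta x t y pa py) a (Qa + y * (Ha' * Gs))).
  { apply (is_derive_plus (fun t => Q1f n beta x t y pa py) (fun t => y * Gf n A x t y pa py)).
    - unfold Q1f, Qa.
      apply (sumR_der 1 n (fun k t => (-1) ^ k * beta k t * Hf x t y pa py ^ (n - k) * Pi x t pa * py ^ (2 * k - 1))
        (fun k _ => (-1) ^ k * py ^ (2 * k - 1) *
        (Derive (beta k) a * h ^ (n - k) * P + beta k a * (INR (n - k) * h ^ pred (n - k) * Ha') * P
         + beta k a * h ^ (n - k) * Pa))).
      intros k Hk.
      apply (term_der (beta k) (fun t => Hf x t y pa py) (fun t => Pi x t pa)); auto.
      apply Derive_correct. apply Hex; auto; lia.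
    - apply is_derive_scal. unfold Gf.
      replace (Ha' * Gs) with (sumR 0 n (fun j => A j * py ^ (2 * (n - j)) * (INR j * h ^ pred j * Ha'))).
      + apply (sumR_der 0 n (fun j t => A j * Hf x t y pa py ^ j * py ^ (2 * (n - j)))
          (fun j _ => A j * py ^ (2 * (n - j)) * (INR j * h ^ pred j * Ha'))).
        intros j Hj. apply (g_der (fun t => Hf x t y pa py)). exact HH_a.
      + unfold Gs. rewrite !sumR_L, <- sumL_scal. apply sumL_ext. intros; ring. }
  assert (HS_pa : is_derive (fun t => S1f n A beta x a y t py) pa (Qpa + y * (Hpa * Gs))).
  { apply (is_derive_plus (fun t => Q1f n beta x a y t py) (fun t => y * Gf n A x a y t py)).
    - unfold Q1f, Qpa.
      apply (sumR_der 1 n (fun k t => (-1) ^ k * beta k a * Hf x a y t py ^ (n - k) * Pi x a t * py ^ (2 * k - 1))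
        (fun k _ => (-1) ^ k * py ^ (2 * k - 1) *
        (0 * h ^ (n - k) * P + beta k a * (INR (n - k) * h ^ pred (n - k) * Hpa) * P
         + beta k a * h ^ (n - k) * (a / D)))).
      intros k Hk.
      apply (term_der (fun _ => beta k a) (fun t => Hf x a y t py) (fun t => Pi x a t)); auto.
      apply (is_derive_const (V:=R_NormedModule) (beta k a) pa).
    - apply is_derive_scal. unfold Gf.
      replace (Hpa * Gs) with (sumR 0 n (fun j => A j * py ^ (2 * (n - j)) * (INR j * h ^ pred j * Hpa))).
      + apply (sumR_der 0 n (fun j t => A j * Hf x a y t py ^ j * py ^ (2 * (n - j)))
          (fun j _ => A j * py ^ (2 * (n - j)) * (INR j * h ^ pred j * Hpa))).
        intros j Hj. apply (g_der (fun t => Hf x a y t py)). exact HH_pa.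
      + unfold Gs. rewrite !sumR_L, <- sumL_scal. apply sumL_ext. intros; ring. }
  assert (HS_y : is_derive (fun t => S1f n A beta x a t pa py) y (Gf n A x a y pa py)).
  { apply (is_derive_ext (fun t => Q1f n beta x a y pa py + t * Gf n A x a y pa py)).
    - intro t. reflexivity.
    - auto_derive; [exact I|]. ring. }
  unfold PB.
  replace (Derive (fun t => Hf x t y pa py) a) with Ha' by (symmetry; apply is_derive_unique; exact HH_a).
  replace (Derive (fun t => Hf x a y t py) pa) with Hpa by (symmetry; apply is_derive_unique; exact HH_pa).
  replace (Derive (fun t => Hf x a y pa t) py) with (2 * a * py) by (symmetry; apply is_derive_unique; exact HH_py).
  rewrite HH_y.
  replace (Derive (fun t => S1f n A beta x t y pa py) a) with (Qa + y * (Ha' * Gs)) by (symmetry; apply is_derive_unique; exact HS_a).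
  replace (Derive (fun t => S1f n A beta x a y t py) pa) with (Qpa + y * (Hpa * Gs)) by (symmetry; apply is_derive_unique; exact HS_pa).
  replace (Derive (fun t => S1f n A beta x a t pa py) y) with (Gf n A x a y pa py) by (symmetry; apply is_derive_unique; exact HS_y).
  assert (M := master n ltac:(lia) A (fun k => beta k a) (fun k => Derive (beta k) a) h P py a D
                 HD HAn eq_refl (H1 a Ha) (fun k Hk => Hsys k a Hk Ha) (Hlast a Ha)).
  assert (QQ : Ha' * Qpa - Hpa * Qa = sumR 1 n (fun k => (-1) ^ k * py ^ (2 * k - 1) * h ^ (n - k) *
                     (beta k a * py ^ 2 * a / D - 2 * P ^ 2 * (a / D) * Derive (beta k) a))).
  { unfold Qa, Qpa. rewrite !sumR_L, <- !sumL_scal, <- sumL_minus. apply sumL_ext.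
    intros k Hk. unfold Ha', Hpa. field. exact HD. }
  cbv beta in M. etransitivity; [| exact M]. rewrite <- QQ. unfold Gf. fold h. ring.
Qed.

Lemma u_der xi e r a : (e = 1 \/ e = -1) -> e * (a - r) > 0 ->
  is_derive (fun t => xi / sqrt (e * (t - r))) a (- (xi / sqrt (e * (a - r))) / (2 * (a - r))).
Proof.
  intros He Hp.
  assert (Hs : 0 < sqrt (e * (a - r))) by (apply sqrt_lt_R0; lra).
  assert (Hss : sqrt (e * (a - r)) * sqrt (e * (a - r)) = e * (a - r)) by (apply sqrt_sqrt; lra).
  assert (Har : a - r <> 0) by (intro Z; rewrite Z in Hp; lra).
  assert (He0 : e <> 0) by lra.
  auto_derive.
  - repeat split; try lra. change (a + - r) with (a - r). lra.
  - change (a + - r) with (a - r). rewrite Hss. field. repeat split; lra.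
Qed.

Definition prodL (m len : nat) (f : nat -> R) : R :=
  fold_right (fun k acc => f k * acc) 1 (List.seq m len).

Lemma prodL_ext len : forall m f g, (forall k, (m <= k < m + len)%nat -> f k = g k) ->
  prodL m len f = prodL m len g.
Proof.
  induction len as [|len IH]; intros m f g H.
  - reflexivity.
  - unfold prodL; simpl. rewrite (H m) by lia. f_equal. apply IH. intros; apply H; lia.
Qed.

Lemma prodL_pick len : forall m i g, (m <= i < m + len)%nat ->
  prodL m len g = g i * prodL m len (fun l => if Nat.eqb l i then 1 else g l).
Proof.
  induction len as [|len IH]; intros m i g Hi.
  - lia.
  - change (prodL m (S len) g) with (g m * prodL (S m) len g).
    change (prodL m (S len) (fun l => if Nat.eqb l i then 1 else g l)) with
      ((if Nat.eqb m i then 1 else g m) * prodL (S m) len (fun l => if Nat.eqb l i then 1 else g l)).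
    destruct (Nat.eq_dec m i) as [E|E].
    + subst m. rewrite Nat.eqb_refl.
      rewrite (prodL_ext len (S i) (fun l => if Nat.eqb l i then 1 else g l) g).
      * ring.
      * intros k Hk. replace (Nat.eqb k i) with false by (symmetry; apply Nat.eqb_neq; lia). reflexivity.
    + replace (Nat.eqb m i) with false by (symmetry; apply Nat.eqb_neq; lia).
      rewrite (IH (S m) i g) by lia. ring.
Qed.

Lemma cont_zero (q : R -> R) : (forall t, t <> 0 -> q t = 0) -> ex_derive q 0 -> q 0 = 0.
Proof.
  intros Hq Hd.
  assert (Hc : continuity_pt q 0).
  { apply continuity_pt_filterlim. apply (ex_derive_continuous (K:=R_AbsRing) (V:=R_NormedModule) q 0). exact Hd. }
  destruct (Req_dec (q 0) 0) as [E|E]; [exact E|]. exfalso.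
  destruct (Hc (Rabs (q 0))) as [alp [Halp Hal]].
  { apply Rabs_pos_lt. exact E. }
  assert (Hx := Hal (alp / 2)). simpl in Hx. unfold R_dist in Hx.
  rewrite Hq in Hx by lra.
  replace (0 - q 0) with (- q 0) in Hx by ring. rewrite Rabs_Ropp in Hx.
  assert (Rabs (alp / 2 - 0) < alp).
  { rewrite Rminus_0_r, Rabs_pos_eq by lra. lra. }
  assert (Hne : 0 <> alp / 2) by lra. apply (Rlt_irrefl (Rabs (q 0))). apply Hx. split; [split; [exact I | exact Hne] | exact H].
Qed.

Lemma poly_zero N : forall c, (forall t, sumL 0 (S N) (fun k => c k * t ^ k) = 0) ->
  forall k, (k <= N)%nat -> c k = 0.
Proof.
  induction N as [|N IH]; intros c Hc.
  - intros k Hk. replace k with 0%nat by lia. specialize (Hc 0).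
    unfold sumL in Hc; simpl in Hc. lra.
  - assert (Hdec : forall t, sumL 0 (S (S N)) (fun k => c k * t ^ k) =
                 c 0%nat + t * sumL 0 (S N) (fun k => c (S k) * t ^ k)).
    { intro t. rewrite sumL_S, sumL_shift, <- sumL_scal. simpl pow.
      f_equal; [ring|]. apply sumL_ext. intros; ring. }
    assert (H0 : c 0%nat = 0).
    { specialize (Hc 0). rewrite Hdec in Hc. lra. }
    assert (Hq : forall t, sumL 0 (S N) (fun k => c (S k) * t ^ k) = 0).
    { assert (Hnz : forall t, t <> 0 -> sumL 0 (S N) (fun k => c (S k) * t ^ k) = 0).
      { intros t Ht. specialize (Hc t). rewrite Hdec, H0 in Hc.
        apply (Rmult_eq_reg_l t); [lra | exact Ht]. }
      intro t. destruct (Req_dec t 0) as [Et|Et]; [|apply Hnz; exact Et].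
      subst t. apply (cont_zero (fun t => sumL 0 (S N) (fun k => c (S k) * t ^ k))); [exact Hnz|].
      eexists. apply (sumL_der (S N) 0 (fun k t => c (S k) * t ^ k) (fun k t => c (S k) * (INR k * t ^ pred k))).
      intros k Hk. auto_derive; [exact I|]. ring. }
    intros k Hk. destruct k as [|k]; [exact H0|].
    apply (IH (fun k => c (S k)) Hq k). lia.
Qed.

Lemma coeffs N (A : nat -> R) r (s : nat -> R) :
  (forall t, sumR 0 (S N) (fun k => A k * t ^ k) =
     (t - r) * sumR 0 (S N - 1) (fun m => (-1) ^ m * s m * t ^ (S N - 1 - m))) ->
  A (S N) = 1 ->
  s 0%nat = 1 /\ (forall k, (1 <= k <= N)%nat -> Defs.sigma (S N) A k = s k + r * s (k - 1)%nat)
  /\ Defs.sigma (S N) A (S N) = r * s N.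
Proof.
  intros Hp HA.
  set (w := fun j => (-1) ^ (N - j) * s (N - j)%nat).
  set (W := fun j => if Nat.leb j N then w j else 0).
  set (Wp := fun k => match k with 0%nat => 0 | S k' => W k' end).
  assert (Hz : forall t, sumL 0 (S (S N)) (fun k => (A k - (Wp k - r * W k)) * t ^ k) = 0).
  { intro t.
    set (SW := sumL 0 (S N) (fun k => w k * t ^ k)).
    assert (E1 : sumL 0 (S (S N)) (fun k => Wp k * t ^ k) = t * SW).
    { rewrite sumL_S, sumL_shift. unfold SW. rewrite <- sumL_scal.
      simpl (Wp 0%nat). rewrite Rmult_0_l, Rplus_0_l. apply sumL_ext.
      intros k Hk. simpl (Wp (S k)). unfold W.
      replace (Nat.leb k N) with true by (symmetry; apply Nat.leb_le; lia). simpl pow. ring. }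
    assert (E2 : sumL 0 (S (S N)) (fun k => W k * t ^ k) = SW).
    { rewrite sumL_Sr. unfold W at 2.
      replace (Nat.leb (0 + S N) N) with false by (symmetry; apply Nat.leb_gt; lia).
      rewrite Rmult_0_l, Rplus_0_r. apply sumL_ext. intros k Hk. unfold W.
      replace (Nat.leb k N) with true by (symmetry; apply Nat.leb_le; lia). reflexivity. }
    assert (E3 : sumR 0 N (fun m => (-1) ^ m * s m * t ^ (N - m)) = SW).
    { rewrite sumR_L. replace (S N - 0)%nat with (S N) by lia. rewrite sumL_rev.
      apply sumL_ext. intros k Hk. unfold w. replace (N - (N - k))%nat with k by lia. reflexivity. }
    rewrite (sumL_ext _ _ _ (fun k => A k * t ^ k - (Wp k * t ^ k - r * (W k * t ^ k)))) by (intros; ring).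
    rewrite sumL_minus, sumL_minus, sumL_scal, E1, E2.
    change (sumL 0 (S (S N)) (fun k => A k * t ^ k)) with (sumR 0 (S N) (fun k => A k * t ^ k)).
    rewrite Hp. replace (S N - 1)%nat with N by lia. rewrite E3. ring. }
  assert (Hk := poly_zero (S N) _ Hz).
  split; [|split].
  - assert (HC := Hk (S N) (le_n _)).
    unfold Wp in HC; cbv beta iota in HC. unfold W in HC.
    rewrite Nat.leb_refl in HC.
    replace (Nat.leb (S N) N) with false in HC by (symmetry; apply Nat.leb_gt; lia).
    unfold w in HC. rewrite Nat.sub_diag in HC. simpl pow in HC. lra.
  - intros k Hk1. destruct k as [|k']; [lia|].
    set (q' := (N - S k')%nat).
    assert (HA' : A (S q') = w q' - r * w (S q')).
    { assert (HC := Hk (S q') ltac:(unfold q'; lia)).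
      unfold Wp in HC; cbv beta iota in HC. unfold W in HC.
      replace (Nat.leb q' N) with true in HC by (symmetry; apply Nat.leb_le; unfold q'; lia).
      replace (Nat.leb (S q') N) with true in HC by (symmetry; apply Nat.leb_le; unfold q'; lia).
      lra. }
    unfold w in HA'.
    replace (N - q')%nat with (S k') in HA' by (unfold q'; lia).
    replace (N - S q')%nat with k' in HA' by (unfold q'; lia).
    unfold Defs.sigma. replace (S N - S k')%nat with (S q') by (unfold q'; lia).
    replace (S k' - 1)%nat with k' by lia.
    rewrite HA'. simpl pow.
    transitivity ((-1) ^ k' * (-1) ^ k' * (s (S k') + r * s k')); [ring | rewrite sign_sq; ring].
  - assert (HC := Hk 0%nat (Nat.le_0_l _)).
    unfold Wp in HC; cbv beta iota in HC. unfold W in HC. simpl (Nat.leb 0 N) in HC.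
    unfold w in HC. replace (N - 0)%nat with N in HC by lia.
    unfold Defs.sigma. replace (S N - S N)%nat with 0%nat by lia.
    replace (A 0%nat) with (- r * ((-1) ^ N * s N)) by lra. simpl pow.
    transitivity ((-1) ^ N * (-1) ^ N * (r * s N)); [ring | rewrite sign_sq; ring].
Qed.

Lemma mulc_der (f : R -> R) f' c a : is_derive f a f' -> is_derive (fun t => f t * c) a (f' * c).
Proof.
  intros Hf. auto_derive.
  - repeat split; eexists; eauto.
  - replace (Derive (fun x => f x) a) with f' by (symmetry; apply is_derive_unique; exact Hf). ring.
Qed.

Lemma part2 (n : nat) (hn : (2 <= n)%nat) :
  (forall (A : nat -> R) (r eps xi : nat -> R) (s : nat -> nat -> R)
          (lo hi : Rbar),
     A n = 1 ->
     (forall t, sumR 0 n (fun k => A k * t ^ k) = prodR 1 n (fun i => t - r i)) ->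
     (forall i j, (1 <= i <= n)%nat -> (1 <= j <= n)%nat -> i <> j -> r i <> r j) ->
     (forall i t, (1 <= i <= n)%nat ->
        prodR 1 n (fun l => if Nat.eqb l i then 1 else t - r l) =
        sumR 0 (n - 1) (fun m => (-1) ^ m * s i m * t ^ (n - 1 - m))) ->
     (forall i, (1 <= i <= n)%nat -> eps i = 1 \/ eps i = -1) ->
     Rbar_le (Finite 0) lo -> Rbar_lt lo hi ->
     (forall i a, (1 <= i <= n)%nat -> in_interval lo hi a -> eps i * (a - r i) > 0) ->
     beta_system n A
       (fun a => sumR 1 n (fun i => xi i / sqrt (eps i * (a - r i))))
       (fun k a => sumR 1 n (fun i => xi i / sqrt (eps i * (a - r i)) * s i (k - 1)%nat))
       (in_interval lo hi)).
Proof.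
  intros A r eps xi s lo hi HAn Hpoly _ Hs Heps _ _ Hpos.
  destruct n as [|N]; [lia|].
  assert (HC : forall i, (1 <= i <= S N)%nat ->
    s i 0%nat = 1 /\ (forall k, (1 <= k <= N)%nat -> Defs.sigma (S N) A k = s i k + r i * s i (k - 1)%nat)
    /\ Defs.sigma (S N) A (S N) = r i * s i N).
  { intros i Hi. apply coeffs; [|exact HAn].
    intro t. rewrite Hpoly, <- (Hs i t Hi). unfold prodR.
    apply (prodL_pick (S (S N) - 1) 1 i (fun l => t - r l)). lia. }
  set (u := fun i a => xi i / sqrt (eps i * (a - r i))).
  set (u' := fun i a => - u i a / (2 * (a - r i))).
  assert (Hu : forall i a, (1 <= i <= S N)%nat -> in_interval lo hi a ->
     is_derive (fun t => xi i / sqrt (eps i * (t - r i))) a (u' i a)).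
  { intros i a Hi Ha. apply u_der; auto. }
  assert (Hx : forall a, in_interval lo hi a ->
     is_derive (fun a => sumR 1 (S N) (fun i => xi i / sqrt (eps i * (a - r i)))) a
               (sumR 1 (S N) (fun i => u' i a))).
  { intros a Ha. apply (sumR_der 1 (S N) (fun i t => xi i / sqrt (eps i * (t - r i))) u' a).
    intros; apply Hu; auto. }
  assert (Hb : forall k a, in_interval lo hi a ->
     is_derive (fun a => sumR 1 (S N) (fun i => xi i / sqrt (eps i * (a - r i)) * s i (k - 1)%nat)) a
               (sumR 1 (S N) (fun i => u' i a * s i (k - 1)%nat))).
  { intros k a Ha.
    apply (sumR_der 1 (S N) (fun i t => xi i / sqrt (eps i * (t - r i)) * s i (k - 1)%nat)
             (fun i a => u' i a * s i (k - 1)%nat) a).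
    intros i Hi. apply (mulc_der (fun t => xi i / sqrt (eps i * (t - r i)))). apply Hu; auto. }
  assert (DB : forall k a, in_interval lo hi a ->
     Derive (fun a => sumR 1 (S N) (fun i => xi i / sqrt (eps i * (a - r i)) * s i (k - 1)%nat)) a
     = sumR 1 (S N) (fun i => u' i a * s i (k - 1)%nat)).
  { intros k a Ha. apply is_derive_unique. apply Hb. exact Ha. }
  assert (DX : forall a, in_interval lo hi a ->
     Derive (fun a => sumR 1 (S N) (fun i => xi i / sqrt (eps i * (a - r i)))) a
     = sumR 1 (S N) (fun i => u' i a)).
  { intros a Ha. apply is_derive_unique. apply Hx. exact Ha. }
  assert (Hne : forall i a, (1 <= i <= S N)%nat -> in_interval lo hi a -> a - r i <> 0).
  { intros i a Hi Ha Z. specialize (Hpos i a Hi Ha). rewrite Z in Hpos. lra. }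
  split; [|split; [|split]].
  - intros k a Hk Ha. eexists. apply Hb. exact Ha.
  - intros a Ha. cbv beta. rewrite DB, DX by exact Ha.
    rewrite !sumR_L. apply sumL_ext. intros i Hi.
    destruct (HC i ltac:(lia)) as [HC0 _]. simpl (1 - 1)%nat. rewrite HC0. ring.
  - intros k a Hk Ha. cbv beta. rewrite DB, DB, DX by exact Ha.
    rewrite !sumR_L, <- !sumL_scal, <- sumL_minus, <- sumL_plus. apply sumL_ext. intros i Hi.
    destruct (HC i ltac:(lia)) as [_ [HC1 _]]. rewrite (HC1 k ltac:(lia)).
    replace (S k - 1)%nat with k by lia.
    assert (Hn := Hne i a ltac:(lia) Ha).
    assert (Hq : sqrt (eps i * (a - r i)) <> 0).
    { apply Rgt_not_eq. apply sqrt_lt_R0. apply Hpos; [lia | exact Ha]. }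
    unfold u', u. field. split; assumption.
  - intros a Ha. cbv beta. rewrite DB, DX by exact Ha.
    rewrite !sumR_L, <- !sumL_scal, <- sumL_minus, <- sumL_plus.
    rewrite (sumL_ext _ _ _ (fun i => 0 * u' i a)).
    + rewrite sumL_scal. ring.
    + intros i Hi.
      destruct (HC i ltac:(lia)) as [_ [_ HC2]]. rewrite HC2.
      replace (S N - 1)%nat with N by lia.
      assert (Hn := Hne i a ltac:(lia) Ha).
      assert (Hq : sqrt (eps i * (a - r i)) <> 0).
    { apply Rgt_not_eq. apply sqrt_lt_R0. apply Hpos; [lia | exact Ha]. }
    unfold u', u. field. split; assumption.
Qed.

Theorem proposition10 (n : nat) (hn : (2 <= n)%nat) :
  (* Part 1 *)
  (forall (A : nat -> R) (lo hi : Rbar) (x : R -> R) (beta : nat -> R -> R),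
     A n = 1 ->
     Rbar_le (Finite 0) lo -> Rbar_lt lo hi ->
     (forall k a, in_interval lo hi a -> ex_derive_n x k a) ->
     (forall a, in_interval lo hi a -> Derive x a <> 0) ->
     beta_system n A x beta (in_interval lo hi) ->
     forall a y pa py, in_interval lo hi a ->
       PB (Hf x) (S1f n A beta x) a y pa py = 0)
  /\
  (* Part 2 *)
  (forall (A : nat -> R) (r eps xi : nat -> R) (s : nat -> nat -> R)
          (lo hi : Rbar),
     A n = 1 ->
     (forall t, sumR 0 n (fun k => A k * t ^ k) = prodR 1 n (fun i => t - r i)) ->
     (forall i j, (1 <= i <= n)%nat -> (1 <= j <= n)%nat -> i <> j -> r i <> r j) ->
     (* sigma^i_m defined by prod_{l<>i}(t - a_l) = sum_{m=0}^{n-1} (-1)^m sigma^i_m t^{n-1-m} *)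
     (forall i t, (1 <= i <= n)%nat ->
        prodR 1 n (fun l => if Nat.eqb l i then 1 else t - r l) =
        sumR 0 (n - 1) (fun m => (-1) ^ m * s i m * t ^ (n - 1 - m))) ->
     (forall i, (1 <= i <= n)%nat -> eps i = 1 \/ eps i = -1) ->
     Rbar_le (Finite 0) lo -> Rbar_lt lo hi ->
     (forall i a, (1 <= i <= n)%nat -> in_interval lo hi a -> eps i * (a - r i) > 0) ->
     beta_system n A
       (fun a => sumR 1 n (fun i => xi i / sqrt (eps i * (a - r i))))
       (fun k a => sumR 1 n (fun i => xi i / sqrt (eps i * (a - r i)) * s i (k - 1)%nat))
       (in_interval lo hi)).
Proof.
  split.
  - exact (part1 n hn).
  - exact (part2 n hn).
Qed.
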